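(* A finite group $G$ is completely $M$-realisable if and only if $G$ is abelian.
   Context: All groups are finite. For a finite group $H$ and $K\leq H$, the Chermak-Delgado measure is $m_H(K)=|K||C_H(K)|$; let $m^*(H)=\max\{m_H(K)\mid K\leq H\}$ and $\mathcal{CD}(H)=\{K\leq H\mid m_H(K)=m^*(H)\}$, which is a sublattice of the subgroup lattice of $H$; its minimal member $M(H)$ is the Chermak-Delgado subgroup of $H$. A finite group $G$ is completely $M$-realisable if there is a finite group $H$ such that: (i) $G\cong M(H)$; (ii) for every subgroup $G_1\leq G$ there exists $H_1\leq H$ with $G_1\cong M(H_1)$; (iii) for every $H_1\leq H$ there exists $G_1\leq G$ with $M(H_1)\cong G_1$. *)

(* Defs.v *)
From mathcomp Require Import all_boot all_fingroup.
Set Implicit Arguments. Unset Strict Implicit. Unset Printing Implicit Defensive.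
Local Open Scope group_scope.

Definition cd_measure (gT : finGroupType) (H K : {set gT}) : nat :=
  (#|K| * #|'C_H(K)|)%N.

Definition cd_max (gT : finGroupType) (H : {set gT}) : nat :=
  \max_(K : {group gT} | K \subset H) cd_measure H K.

Definition in_CD (gT : finGroupType) (H : {set gT}) (K : {group gT}) : bool :=
  (K \subset H) && (cd_measure H K == cd_max H).

Definition is_CD_subgroup (gT : finGroupType) (H : {set gT}) (K : {group gT})
  : Prop :=
  in_CD H K /\ forall L : {group gT}, in_CD H L -> K \subset L.

Definition completely_M_realisable (gT : finGroupType) (G : {group gT}) : Prop :=
  exists (hT : finGroupType) (H : {group hT}),
    [/\ (exists K : {group hT}, is_CD_subgroup H K /\ G \isog K),
        (forall G1 : {group gT}, G1 \subset G ->
           exists H1 : {group hT}, H1 \subset H /\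
             exists K : {group hT}, is_CD_subgroup H1 K /\ G1 \isog K)
      & (forall H1 : {group hT}, H1 \subset H ->
           exists K : {group hT}, is_CD_subgroup H1 K /\
             exists G1 : {group gT}, G1 \subset G /\ K \isog G1)].

(* Main.v *)
Require Import Defs.
From mathcomp Require Import all_boot all_fingroup.
Set Implicit Arguments. Unset Strict Implicit. Unset Printing Implicit Defensive.
Local Open Scope group_scope.

Lemma cd_le (gT : finGroupType) (H K : {group gT}) :
  K \subset H -> cd_measure H K <= cd_max H.
Proof. by move=> sKH; rewrite /cd_max (leq_bigmax_cond K sKH). Qed.

Lemma CD_min_abelian (hT : finGroupType) (H K : {group hT}) :
  is_CD_subgroup H K -> abelian K.
Proof.
case=> /andP[sKH /eqP mK] minK.
have sCH : 'C_H(K)%G \subset H by apply: subsetIl.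
have inC : in_CD H 'C_H(K)%G.
  rewrite /in_CD sCH /= eqn_leq cd_le //= -mK /cd_measure mulnC.
  rewrite leq_mul // subset_leq_card //.
  apply/subsetIP; split=> //; rewrite centsC; exact: subsetIr.
have := minK _ inC => /subsetIP[_]; done.
Qed.

Lemma abelian_CD (gT : finGroupType) (A : {group gT}) :
  abelian A -> is_CD_subgroup A A.
Proof.
move=> abA.
have CA : forall L : {group gT}, L \subset A -> 'C_A(L) = A.
  move=> L sLA; apply/setIidPl; rewrite centsC; exact: subset_trans sLA abA.
have mx : cd_max A = (#|A| * #|A|)%N.
  apply/eqP; rewrite eqn_leq; apply/andP; split.
    rewrite /cd_max; apply/bigmax_leqP => L sLA; rewrite /cd_measure CA //.
    by rewrite leq_mul // subset_leq_card.
  by have := cd_le (subxx A); rewrite /cd_measure CA.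
split.
  rewrite /in_CD subxx /=. rewrite /cd_measure. rewrite CA //. rewrite mx. done.
move=> L /andP[sLA /eqP]; rewrite /cd_measure CA // mx => e.
have e2 : #|L| = #|A|.
  apply/eqP; rewrite -(eqn_pmul2r (cardG_gt0 A)); by apply/eqP.
have : L :==: A by rewrite eqEcard sLA e2 leqnn.
by move/eqP=> ->.
Qed.

Theorem mainTheorem2 (gT : finGroupType) (G : {group gT}) :
  completely_M_realisable G <-> abelian G.
Proof.
split.
  case=> hT [H [[K [cdK iso]] _ _]].
  by rewrite (isog_abelian iso); exact: CD_min_abelian cdK.
move=> abG; exists gT, G; split.
- by exists G; split; [exact: abelian_CD | exact: isog_refl].
- move=> G1 sG1; exists G1; split=> //; exists G1; split; last exact: isog_refl.
  exact/abelian_CD/(abelianS sG1).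
- move=> H1 sH1; exists H1; split; first exact/abelian_CD/(abelianS sH1).
  by exists H1; split=> //; exact: isog_refl.
Qed.
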